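(* Assume (RHS.1), (RHS.2), (BC.1), (BC.2), and, if (RHS.2b) holds, that condition (M.1) holds for all meshes. Then for any choice of parameters $\mathfrak h=(h,\varepsilon,\theta)$ there exists a unique $u_{\mathfrak h}\in\mathbb V_h$ solving the discrete problem.
   Context: Setting: $\Omega\subset\mathbb R^d$ ($d\ge1$) is a bounded domain with continuous boundary. For $r>0$, $\Omega^{(r)}=\{x\in\Omega:\operatorname{dist}(x,\partial\Omega)>r\}$. $\{\mathcal T_h\}_{h>0}$ is a family of meshes of closed simplices, $h=\max_T\operatorname{diam}T$, $\Omega_h$ the interior of the union of the simplices, with $\Omega^{(h)}\subset\Omega_h\subset\Omega$; $\mathcal N_h$ the set of vertices. $\mathbb V_h$: continuous piecewise linear functions on $\mathcal T_h$, hat basis $\{\hat\varphi_z\}$, Lagrange interpolant $\mathcal I_h$. Parameters $\mathfrak h=(h,\varepsilon,\theta)$, $\varepsilon\in[h,\operatorname{diam}\Omega]$, $0<\theta\le1$. $\mathcal N_h^I=\mathcal N_h\cap\Omega^{(2\varepsilon)}$, $\mathcal N_h^b=\mathcal N_h\setminus\mathcal N_h^I$. $\mathbb S_\theta$: finite symmetric subset of the unit sphere $\mathbb S$ such that each $v\in\mathbb S$ has $v_\theta\in\mathbb S_\theta$ with $|v-v_\theta|\le\theta$. For $z\in\mathcal N_h^I$: $\mathcal N_{\mathfrak h}(z)=\{z\}\cup\{z+\varepsilon v_\theta:v_\theta\in\mathbb S_\theta\}$, $-\Delta^\diamond_{\infty,\mathfrak h}w(z)=\varepsilon^{-2}\big(2w(z)-\max_{x\in\mathcal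 N_{\mathfrak h}(z)}\mathcal I_hw(x)-\min_{x\in\mathcal N_{\mathfrak h}(z)}\mathcal I_hw(x)\big)$, $\widetilde{\mathcal N}_{\mathfrak h}(z)=\{z\}\cup\{z'\in\mathcal N_h:\exists v_\theta\in\mathbb S_\theta,\ \hat\varphi_{z'}(z+\varepsilon v_\theta)>0\}$. Assumptions: (RHS.1) $f\in C(\Omega)\cap L^\infty(\Omega)$. (RHS.2) either (RHS.2a) $\sup_\Omega f<0$ or $\inf_\Omega f>0$, or (RHS.2b) $f\equiv0$. (BC.1) $g\in C(\partial\Omega)$. (BC.2) for every $\varepsilon>0$ a function $\tilde g_\varepsilon\in C(\overline\Omega)$ is given such that, if $g\in C^{0,\alpha}(\partial\Omega)$ for some $\alpha\in[0,1]$, then $\tilde g_\varepsilon\in C^{0,\alpha}(\overline\Omega)$ and $\|g-\tilde g_\varepsilon\|_{L^\infty(\partial\Omega)}\le C\varepsilon^\alpha$. (M.1) for every nonempty $S\subset\mathcal N_h^I$ there are $z\in S$, $z'\in\mathcal N_h\setminus S$ with $z'\in\widetilde{\mathcal N}_{\mathfrak h}(z)$. Discrete problem: find $u_{\mathfrak h}\in\mathbb V_h$ with $-\Delta^\diamond_{\infty,\mathfrak h}u_{\mathfrak h}(z)=f(z)$ for $z\in\mathcal N_h^I$ and $u_{\mathfrak h}(z)=\tilde g_\varepsilon(z)$ for $z\in\mathcal N_h^b$. *)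

(* Defs.v *)
From mathcomp Require Import all_boot all_order all_algebra.
From mathcomp Require Import reals exp.
Set Implicit Arguments. Unset Strict Implicit. Unset Printing Implicit Defensive.
Import Order.TTheory GRing.Theory Num.Theory.
Local Open Scope ring_scope.

Section Defs.
Variable R : realType.

Definition enorm (k : nat) (x : 'rV[R]_k) : R := Num.sqrt (\sum_i (x 0 i) ^+ 2).

Variable n : nat.
(* points of R^d with d = n.+1 >= 1 *)
Notation pt := 'rV[R]_n.+1.

Definition eopen (A : pt -> Prop) :=
  forall x, A x -> exists2 r, 0 < r & forall y, enorm (y - x) < r -> A y.
Definition einterior (A : pt -> Prop) (x : pt) :=
  exists2 r, 0 < r & forall y, enorm (y - x) < r -> A y.
Definition eclosure (A : pt -> Prop) (x : pt) :=
  forall r, 0 < r -> exists y, A y /\ enorm (y - x) < r.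
Definition boundary (A : pt -> Prop) (x : pt) := eclosure A x /\ ~ einterior A x.
Definition ebounded (A : pt -> Prop) := exists M : R, forall x, A x -> enorm x <= M.
Definition econnected (A : pt -> Prop) :=
  forall U V : pt -> Prop, eopen U -> eopen V -> (forall x, A x -> U x \/ V x) ->
  (exists x, A x /\ U x) -> (exists x, A x /\ V x) -> exists x, A x /\ U x /\ V x.
Definition econt_on (S : pt -> Prop) (f : pt -> R) :=
  forall x, S x -> forall e, 0 < e -> exists2 d, 0 < d &
    forall y, S y -> enorm (y - x) < d -> `|f y - f x| < e.

Definition front (y : pt) : 'rV[R]_n := \row_(i < n) y 0 (widen_ord (leqnSn n) i).
Definition lastc (y : pt) : R := y 0 ord_max.

(* Omega has a continuous boundary: locally, after a rigid change of
   coordinates, Omega is the strict epigraph of a continuous function *)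
Definition continuous_boundary (Om : pt -> Prop) :=
  forall x0, boundary Om x0 ->
  exists2 r, 0 < r & exists Q : 'M[R]_n.+1, Q *m Q^T = 1%:M /\
    exists phi : 'rV[R]_n -> R,
      (forall y0 e, 0 < e -> exists2 d, 0 < d &
          forall y, enorm (y - y0) < d -> `|phi y - phi y0| < e) /\
      forall x, enorm (x - x0) < r ->
        (Om x <-> phi (front ((x - x0) *m Q)) < lastc ((x - x0) *m Q)).

Definition bounded_domain_cb (Om : pt -> Prop) :=
  (exists x, Om x) /\ eopen Om /\ econnected Om /\ ebounded Om /\ continuous_boundary Om.

(* Omega^(r) = { x in Omega : dist(x, boundary Omega) > r } *)
Definition inner (Om : pt -> Prop) (r : R) (x : pt) :=
  Om x /\ exists2 s, r < s & forall y, boundary Om y -> s <= enorm (x - y).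

(* eps <= diam Omega *)
Definition le_diam (Om : pt -> Prop) (e : R) :=
  forall d, 0 < d -> exists x y, Om x /\ Om y /\ e - d < enorm (x - y).

Definition holder (alpha : R) (S : pt -> Prop) (f : pt -> R) :=
  econt_on S f /\ (exists M, forall x, S x -> `|f x| <= M) /\
  exists L, forall x y, S x -> S y -> x <> y ->
    `|f x - f y| <= L * powR (enorm (x - y)) alpha.

(* --- meshes: m closed simplices T k, each given by its n.+2 = d+1 vertices --- *)
Definition simplex := 'I_n.+2 -> pt.

Definition bary (T : simplex) (lam : 'I_n.+2 -> R) (x : pt) :=
  (forall i, 0 <= lam i) /\ \sum_i lam i = 1 /\ x = \sum_i lam i *: T i.

Definition nondeg_simplex (T : simplex) :=
  forall mu : 'I_n.+2 -> R, \sum_i mu i = 0 -> \sum_i mu i *: T i = 0 ->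
    forall i, mu i = 0.

Definition in_mesh (m : nat) (Th : 'I_m -> simplex) (x : pt) :=
  exists k lam, bary (Th k) lam x.

(* conforming: the intersection of two simplices is the convex hull of
   their common vertices (a common face, possibly empty) *)
Definition conforming (m : nat) (Th : 'I_m -> simplex) :=
  forall k1 k2 lam x, bary (Th k1) lam x -> in_mesh (fun _ : 'I_1 => Th k2) x ->
    forall i, 0 < lam i -> exists j, Th k2 j = Th k1 i.

Definition is_node (m : nat) (Th : 'I_m -> simplex) (z : pt) :=
  exists k i, Th k i = z.

(* V_h : continuous piecewise linear functions (linear on every simplex) *)
Definition in_Vh (m : nat) (Th : 'I_m -> simplex) (u : pt -> R) :=
  forall k lam x, bary (Th k) lam x -> u x = \sum_i lam i * u (Th k i).

(* hat function of node z' is positive at x *)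
Definition hat_pos (m : nat) (Th : 'I_m -> simplex) (z' x : pt) :=
  exists k i lam, Th k i = z' /\ bary (Th k) lam x /\ 0 < lam i.

Definition sphere_net (theta : R) (S : seq pt) :=
  (forall v, v \in S -> enorm v = 1) /\ (forall v, v \in S -> - v \in S) /\
  forall v : pt, enorm v = 1 -> exists2 w, w \in S & enorm (v - w) <= theta.

(* discrete operator -Delta^diamond_{infty,h} w(z) (w in V_h, so I_h w = w) *)
Definition disc_inflap (eps : R) (S : seq pt) (w : pt -> R) (z : pt) : R :=
  eps ^-2 * (2 * w z - \big[Num.max/w z]_(v <- S) w (z + eps *: v)
                     - \big[Num.min/w z]_(v <- S) w (z + eps *: v)).

Definition cond_M1 (m : nat) (Th : 'I_m -> simplex) (Om : pt -> Prop)
    (eps : R) (S : seq pt) :=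
  forall P : pt -> Prop, (forall z, P z -> is_node Th z /\ inner Om (2 * eps) z) ->
    (exists z, P z) ->
    exists z z', P z /\ is_node Th z' /\ ~ P z' /\
      (z' = z \/ exists2 v, v \in S & hat_pos Th z' (z + eps *: v)).

Definition disc_solution (m : nat) (Th : 'I_m -> simplex) (Om : pt -> Prop)
    (eps : R) (S : seq pt) (f gt : pt -> R) (u : pt -> R) :=
  in_Vh Th u /\
  (forall z, is_node Th z -> inner Om (2 * eps) z -> disc_inflap eps S u z = f z) /\
  (forall z, is_node Th z -> ~ inner Om (2 * eps) z -> u z = gt z).

End Defs.

(* Main.v *)
Require Import Defs.
From mathcomp Require Import all_boot all_order all_algebra.
From mathcomp Require Import reals exp.
From mathcomp Require Import boolp classical_sets.
From mathcomp Require Import ring lra.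
Set Implicit Arguments. Unset Strict Implicit. Unset Printing Implicit Defensive.
Import Order.TTheory GRing.Theory Num.Theory.
Local Open Scope ring_scope.
Section Norm.
Variable R : realType.
Variable n : nat.
Notation pt := 'rV[R]_n.+1.

Definition sq (x : pt) : R := \sum_i (x 0 i) ^+ 2.
Definition dot (x y : pt) : R := \sum_i (x 0 i * y 0 i).

Lemma sq_ge0 (x : pt) : 0 <= sq x.
Proof. by apply: sumr_ge0 => i _; rewrite sqr_ge0. Qed.

Lemma enormE (x : pt) : enorm x = Num.sqrt (sq x).
Proof. by []. Qed.

Lemma enorm_ge0 (x : pt) : 0 <= enorm x.
Proof. exact: sqrtr_ge0. Qed.

Lemma sqZ c (x : pt) : sq (c *: x) = c ^+ 2 * sq x.
Proof. rewrite /sq mulr_sumr; apply: eq_bigr => i _; rewrite !mxE; ring. Qed.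

Lemma enormZ c (x : pt) : enorm (c *: x) = `|c| * enorm x.
Proof. by rewrite enormE sqZ sqrtrM ?sqr_ge0 // sqrtr_sqr. Qed.

Lemma enorm0 : enorm (0 : pt) = 0.
Proof. by rewrite -(scale0r (0:pt)) enormZ normr0 mul0r. Qed.

Lemma enormN (x : pt) : enorm (- x) = enorm x.
Proof. by rewrite -scaleN1r enormZ normrN normr1 mul1r. Qed.

Lemma enormB (x y : pt) : enorm (x - y) = enorm (y - x).
Proof. by rewrite -enormN opprB. Qed.

Lemma sqD (x y : pt) : sq (x + y) = sq x + 2 * dot x y + sq y.
Proof.
rewrite /sq /dot mulr_sumr -!big_split /=; apply: eq_bigr => i _; rewrite !mxE; ring.
Qed.

Lemma sq_eq0 (x : pt) : sq x = 0 -> forall i, x 0 i = 0.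
Proof.
move=> H i; have := psumr_eq0P (P := predT) (F := fun i => x 0 i ^+ 2).
by move=> /(_ (fun i _ => sqr_ge0 _) H i isT) /eqP; rewrite sqrf_eq0 => /eqP.
Qed.

Lemma cauchy_schwarz (x y : pt) : dot x y ^+ 2 <= sq x * sq y.
Proof.
have hA := sq_ge0 x; have hB := sq_ge0 y.
case: (ltrgtP (sq x) 0) => hx; first by move: hA; rewrite leNgt hx.
  set t := - dot x y / sq x.
  have := sq_ge0 (t *: x + y); rewrite sqD sqZ.
  have -> : dot (t *: x) y = t * dot x y.
    by rewrite /dot mulr_sumr; apply: eq_bigr => i _; rewrite !mxE mulrA.
  have ht : t * sq x = - dot x y by rewrite /t divfK // gt_eqF.
  move=> H.
  have : 0 <= sq x * (t ^+ 2 * sq x + 2 * (t * dot x y) + sq y).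
    by apply: mulr_ge0.
  have -> : sq x * (t ^+ 2 * sq x + 2 * (t * dot x y) + sq y)
     = (t * sq x) ^+ 2 + 2 * (t * sq x) * dot x y + sq x * sq y by ring.
  rewrite ht; lra.
have -> : dot x y = 0.
  by rewrite /dot big1 // => i _; rewrite (sq_eq0 hx) mul0r.
by rewrite expr0n /= mulr_ge0.
Qed.

Lemma dot_le (x y : pt) : dot x y <= enorm x * enorm y.
Proof.
rewrite !enormE -sqrtrM ?sq_ge0 //.
apply: le_trans (ler_norm _) _.
by rewrite -sqrtr_sqr ler_sqrt ?mulr_ge0 ?sq_ge0 // cauchy_schwarz.
Qed.

Lemma enormD (x y : pt) : enorm (x + y) <= enorm x + enorm y.
Proof.
have h1 := enorm_ge0 x; have h2 := enorm_ge0 y.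
rewrite -(ler_pXn2r (n:=2)) // ?nnegrE ?addr_ge0 ?enorm_ge0 //.
rewrite !enormE sqr_sqrtr ?sq_ge0 // sqD -!enormE.
have := dot_le x y.
have -> : sq x = enorm x ^+ 2 by rewrite enormE sqr_sqrtr ?sq_ge0.
have -> : sq y = enorm y ^+ 2 by rewrite enormE sqr_sqrtr ?sq_ge0.
move=> H; nra.
Qed.

End Norm.

Section Seg.
Variable R : realType.
Variable n : nat.
Notation pt := 'rV[R]_n.+1.

Lemma diffZ (z d : pt) a b : (z + a *: d) - (z + b *: d) = (a - b) *: d.
Proof. by rewrite scalerBl opprD addrACA subrr add0r. Qed.

Lemma seg_in (Om : pt -> Prop) (z d : pt) s :
  eopen Om -> Om z -> (forall y, boundary Om y -> s <= enorm (z - y)) ->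
  enorm d < s -> Om (z + d).
Proof.
move=> hop hz hb hd.
have hd0 := enorm_ge0 d.
pose T : set R := fun t => 0 <= t <= 1 /\ forall t', 0 <= t' <= t -> Om (z + t' *: d).
have T0 : T 0.
  split; first by rewrite lexx ler01.
  move=> t' /andP[h1 h2]; have -> : t' = 0 by apply/eqP; rewrite eq_le h1 h2.
  by rewrite scale0r addr0.
have hsup : has_sup T.
  split; first by exists 0.
  by exists 1 => t [/andP[_ ?] _].
set ts := sup T.
have ts0 : 0 <= ts by apply: sup_upper_bound.
have ts1 : ts <= 1.
  by apply: ge_sup; [exists 0 | move=> t [/andP[_ ?] _]].
have keyA : forall t', 0 <= t' < ts -> Om (z + t' *: d).
  move=> t' /andP[h1 h2].
  have h0 : 0 < ts - t' by rewrite subr_gt0.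
  have [e [_ He] He2] := sup_adherent h0 hsup.
  apply: He; rewrite h1 /=; apply: ltW; move: He2; rewrite /ts; lra.
set q := z + ts *: d.
have hdp : 0 < enorm d + 1 by lra.
case: (pselect (einterior Om q)) => [[r r0 hr]|hni].
  set del := r / (enorm d + 1).
  have del0 : 0 < del by rewrite divr_gt0.
  have hdel : del * enorm d < r.
    rewrite /del mulrAC ltr_pdivrMr // ltr_pM2l //; lra.
  set t1 := Num.min 1 (ts + del).
  have Tt1 : T t1.
    split.
      rewrite /t1 le_min ge_min lexx ler01 /=; lra.
    move=> t' /andP[h1 h2].
    case: (ltP t' ts) => h3; first by apply: keyA; rewrite h1 h3.
    apply: hr; rewrite /q diffZ enormZ.
    have : t' <= ts + del by move: h2; rewrite /t1 le_min => /andP[].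
    move=> h4; rewrite ger0_norm ?subr_ge0 //.
    apply: le_lt_trans hdel; apply: ler_wpM2r => //; lra.
  have : t1 <= ts by apply: sup_upper_bound.
  rewrite /t1 ge_min => /orP[h1|]; last by lra.
  have -> : d = 1 *: d by rewrite scale1r.
  have -> : (1 : R) = ts by apply/eqP; rewrite eq_le h1 ts1.
  by apply: hr; rewrite subrr enorm0.
exfalso.
have bq : boundary Om q.
  split=> // r r0.
  set del := r / (enorm d + 1).
  have del0 : 0 < del by rewrite divr_gt0.
  have hdel : del * enorm d < r.
    rewrite /del mulrAC ltr_pdivrMr // ltr_pM2l //; lra.
  have [e [/andP[e0 e1] He] He2] := sup_adherent del0 hsup.
  have ets : e <= ts by apply: sup_upper_bound => //; split => //; rewrite e0 e1.
  exists (z + e *: d); split.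
    by apply: He; rewrite e0 lexx.
  rewrite /q diffZ enormZ ler0_norm ?subr_le0 //.
  apply: le_lt_trans hdel; apply: ler_wpM2r => //; move: He2; rewrite /ts; lra.
have := hb _ bq.
rewrite /q opprD addrA subrr add0r enormN enormZ ger0_norm //.
have : ts * enorm d <= enorm d by rewrite ler_piMl.
lra.
Qed.

End Seg.

Section Interp.
Variable R : realType.
Variable n : nat.
Notation pt := 'rV[R]_n.+1.
Variable m : nat.
Variable Th : 'I_m -> simplex R n.

Lemma sum_partition (V : nmodType) (s : 'I_n.+2 -> 'I_n.+2) (F : 'I_n.+2 -> V) :
  \sum_j \sum_(i | s i == j) F i = \sum_i F i.
Proof. by rewrite [RHS](partition_big s predT). Qed.

Lemma bary_eq (hnd : forall k, nondeg_simplex (Th k)) (hc : conforming Th)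
  k1 l1 k2 l2 x (U : pt -> R) :
  bary (Th k1) l1 x -> bary (Th k2) l2 x ->
  \sum_i l1 i * U (Th k1 i) = \sum_j l2 j * U (Th k2 j).
Proof.
move=> H1 H2.
have hcf := @hc k1 k2 l1 x H1 (ex_intro _ ord0 (ex_intro _ l2 H2)).
case: H1 => [l1p [l1s l1x]]; case: H2 => [l2p [l2s l2x]].
pose s i := odflt ord0 [pick j | Th k2 j == Th k1 i].
have hs : forall i, l1 i != 0 -> Th k2 (s i) = Th k1 i.
  move=> i hi; have hp : 0 < l1 i by rewrite lt_def hi l1p.
  have [j hj] := hcf i hp.
  rewrite /s; case: pickP => [j0 /eqP //|no].
  by have := no j; rewrite hj eqxx.
have hsZ : forall i, l1 i *: Th k2 (s i) = l1 i *: Th k1 i.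
  by move=> i; case: (eqVneq (l1 i) 0) => [->|/hs ->]; rewrite ?scale0r.
have hsM : forall i, l1 i * U (Th k2 (s i)) = l1 i * U (Th k1 i).
  by move=> i; case: (eqVneq (l1 i) 0) => [->|/hs ->]; rewrite ?mul0r.
pose mu j := \sum_(i | s i == j) l1 i.
have hmu : forall j, mu j = l2 j.
  move=> j0; apply/eqP; rewrite -subr_eq0; apply/eqP.
  apply: (hnd k2 (fun j => mu j - l2 j)).
    by rewrite sumrB /mu sum_partition l1s l2s subrr.
  under eq_bigr do rewrite scalerBl.
  rewrite sumrB -l2x /mu.
  under eq_bigr do rewrite scaler_suml.
  have -> : \sum_j \sum_(i | s i == j) l1 i *: Th k2 j
          = \sum_j \sum_(i | s i == j) l1 i *: Th k2 (s i).
    by apply: eq_bigr => j _; apply: eq_bigr => i /eqP ->.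
  by rewrite sum_partition; under eq_bigr do rewrite hsZ; rewrite -l1x subrr.
under [RHS]eq_bigr do rewrite -hmu /mu mulr_suml.
have -> : \sum_j \sum_(i | s i == j) l1 i * U (Th k2 j)
        = \sum_j \sum_(i | s i == j) l1 i * U (Th k2 (s i)).
  by apply: eq_bigr => j _; apply: eq_bigr => i /eqP ->.
by rewrite sum_partition; apply: eq_bigr => i _; rewrite hsM.
Qed.

Definition interp (U : pt -> R) (x : pt) : R :=
  match pselect (exists kl : 'I_m * ('I_n.+2 -> R), bary (Th kl.1) kl.2 x) with
  | left H => let kl := proj1_sig (cid H) in \sum_i kl.2 i * U (Th kl.1 i)
  | right _ => 0 end.

Hypothesis hnd : forall k, nondeg_simplex (Th k).
Hypothesis hc : conforming Th.

Lemma interpE U k lam x : bary (Th k) lam x ->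
  interp U x = \sum_i lam i * U (Th k i).
Proof.
move=> Hb; rewrite /interp; case: pselect => [H|nH].
  by case: cid => [[k' l'] /= Hb']; exact: (@bary_eq hnd hc _ _ _ _ _ U Hb' Hb).
by exfalso; apply: nH; exists (k, lam).
Qed.

Lemma bary_delta k i : bary (Th k) (fun j => (j == i)%:R) (Th k i).
Proof.
split; first by move=> j; rewrite ler0n.
split.
  by rewrite (bigD1 i) //= big1 ?eqxx ?addr0 // => j /negbTE ->.
by rewrite (bigD1 i) //= big1 ?eqxx ?scale1r ?addr0 // => j /negbTE ->; rewrite scale0r.
Qed.

Lemma interp_node U k i : interp U (Th k i) = U (Th k i).
Proof.
rewrite (interpE U (bary_delta k i)).
by rewrite (bigD1 i) //= big1 ?eqxx ?mul1r ?addr0 // => j /negbTE ->; rewrite mul0r.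
Qed.

Lemma interp_le U V x : (forall k i, U (Th k i) <= V (Th k i)) ->
  interp U x <= interp V x.
Proof.
move=> H; rewrite /interp; case: pselect => [Hx|_] //.
case: cid => [[k l] /= [lp _]]; apply: ler_sum => i _.
by apply: ler_wpM2l.
Qed.

Lemma in_Vh_interp U : in_Vh Th (interp U).
Proof.
move=> k lam x Hb; rewrite (interpE U Hb); apply: eq_bigr => i _.
by rewrite interp_node.
Qed.

Lemma jensen1 (lam a : 'I_n.+2 -> R) : (forall i, 0 <= lam i) -> \sum_i lam i = 1 ->
  (\sum_i lam i * a i) ^+ 2 <= \sum_i lam i * a i ^+ 2.
Proof.
move=> lp ls; set c := \sum_i lam i * a i.
have H : 0 <= \sum_i lam i * (a i - c) ^+ 2.
  by apply: sumr_ge0 => i _; rewrite mulr_ge0 ?sqr_ge0.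
move: H.
rewrite (eq_bigr (fun i => lam i * a i ^+ 2 - (2 * c) * (lam i * a i) + c ^+ 2 * lam i)); last by move=> i _; ring.
rewrite big_split sumrB /= -!mulr_sumr -/c ls; nra.
Qed.

Lemma jensen k lam x : bary (Th k) lam x -> sq x <= \sum_i lam i * sq (Th k i).
Proof.
case=> [lp [ls lx]]; rewrite /sq.
under [X in _ <= X]eq_bigr do rewrite mulr_sumr.
rewrite exchange_big /=; apply: ler_sum => j _.
rewrite lx summxE.
rewrite (eq_bigr (fun i => lam i * Th k i 0 j)); last by move=> i _; rewrite !mxE.
exact: jensen1.
Qed.

End Interp.

Section BigMM.
Variable R : realType.
Variable T : eqType.

Lemma bmax_ge0 (s : seq T) (F : T -> R) x0 : x0 <= \big[Num.max/x0]_(v <- s) F v.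
Proof. by elim: s => [|a s IH]; rewrite ?big_nil ?big_cons ?lexx // le_max IH orbT. Qed.

Lemma bmax_ge (s : seq T) (F : T -> R) x0 v : v \in s -> F v <= \big[Num.max/x0]_(v <- s) F v.
Proof.
elim: s => [|a s IH] //; rewrite in_cons big_cons le_max => /orP[/eqP ->|/IH ->].
  by rewrite lexx. by rewrite orbT.
Qed.

Lemma bmax_le (s : seq T) (F : T -> R) x0 y : x0 <= y -> (forall v, v \in s -> F v <= y) ->
  \big[Num.max/x0]_(v <- s) F v <= y.
Proof.
move=> h0; elim: s => [|a s IH] H; rewrite ?big_nil ?big_cons // ge_max H ?mem_head //=.
by apply: IH => v hv; apply: H; rewrite in_cons hv orbT.
Qed.

Lemma bmax_cases (s : seq T) (F : T -> R) x0 :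
  \big[Num.max/x0]_(v <- s) F v = x0 \/ exists2 v, v \in s & \big[Num.max/x0]_(v <- s) F v = F v.
Proof.
elim: s => [|a s IH]; first by left; rewrite big_nil.
rewrite big_cons.
have : Num.max (F a) (\big[Num.max/x0]_(v <- s) F v) = F a \/ Num.max (F a) (\big[Num.max/x0]_(v <- s) F v) = \big[Num.max/x0]_(v <- s) F v.
  by case: (leP (F a) (\big[Num.max/x0]_(v <- s) F v)) => _; [right|left].
case=> ->; first by right; exists a => //; rewrite mem_head.
case: IH => [->|[v hv ->]]; [by left | right; exists v => //].
by rewrite in_cons hv orbT.
Qed.

Lemma bmin_le0 (s : seq T) (F : T -> R) x0 : \big[Num.min/x0]_(v <- s) F v <= x0.
Proof. by elim: s => [|a s IH]; rewrite ?big_nil ?big_cons ?lexx // ge_min IH orbT. Qed.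

Lemma bmin_le (s : seq T) (F : T -> R) x0 v : v \in s -> \big[Num.min/x0]_(v <- s) F v <= F v.
Proof.
elim: s => [|a s IH] //; rewrite in_cons big_cons ge_min => /orP[/eqP ->|/IH ->].
  by rewrite lexx. by rewrite orbT.
Qed.

Lemma bmin_ge (s : seq T) (F : T -> R) x0 y : y <= x0 -> (forall v, v \in s -> y <= F v) ->
  y <= \big[Num.min/x0]_(v <- s) F v.
Proof.
move=> h0; elim: s => [|a s IH] H; rewrite ?big_nil ?big_cons // le_min H ?mem_head //=.
by apply: IH => v hv; apply: H; rewrite in_cons hv orbT.
Qed.

Lemma bmin_cases (s : seq T) (F : T -> R) x0 :
  \big[Num.min/x0]_(v <- s) F v = x0 \/ exists2 v, v \in s & \big[Num.min/x0]_(v <- s) F v = F v.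
Proof.
elim: s => [|a s IH]; first by left; rewrite big_nil.
rewrite big_cons.
have : Num.min (F a) (\big[Num.min/x0]_(v <- s) F v) = F a \/ Num.min (F a) (\big[Num.min/x0]_(v <- s) F v) = \big[Num.min/x0]_(v <- s) F v.
  by case: (leP (F a) (\big[Num.min/x0]_(v <- s) F v)) => _; [left|right].
case=> ->; first by right; exists a => //; rewrite mem_head.
case: IH => [->|[v hv ->]]; [by left | right; exists v => //].
by rewrite in_cons hv orbT.
Qed.

End BigMM.

Section Main.
Variable R : realType.
Variable n : nat.
Notation pt := 'rV[R]_n.+1.
Variable Om : pt -> Prop.
Variables (f G : pt -> R).
Variable m : nat.
Variable Th : 'I_m -> simplex R n.
Variables (h eps : R) (S : seq pt).
Hypothesis hop : eopen Om.
Hypothesis hh0 : 0 < h.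
Hypothesis hh : h <= eps.
Hypothesis hmesh : forall x, inner Om h x -> einterior (in_mesh Th) x.
Hypothesis hSu : forall v, v \in S -> enorm v = 1.

Lemma stencil z v : inner Om (2 * eps) z -> v \in S ->
  exists k lam, bary (Th k) lam (z + eps *: v).
Proof.
move=> [hz [s hs hb]] hv.
have heps : 0 < eps by apply: lt_le_trans hh.
have hd : enorm (eps *: v) = eps by rewrite enormZ hSu // mulr1 gtr0_norm.
have hin : inner Om h (z + eps *: v).
  split.
    by apply: (seg_in hop hz hb); rewrite hd; lra.
  exists (s - eps); first by apply: le_lt_trans hh _; lra.
  move=> y hy; have := hb y hy.
  have := enormD (z + eps *: v - y) (- (eps *: v)).
  rewrite enormN hd.
  have -> : z + eps *: v - y + - (eps *: v) = z - y.
    by rewrite addrAC addrK.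
  lra.
have [r r0 hr] := hmesh hin.
by apply: hr; rewrite subrr enorm0.
Qed.

Definition mxU (U : pt -> R) z := \big[Num.max/U z]_(v <- S) interp Th U (z + eps *: v).
Definition mnU (U : pt -> R) z := \big[Num.min/U z]_(v <- S) interp Th U (z + eps *: v).

Definition TT (U : pt -> R) (z : pt) : R :=
  if pselect (inner Om (2 * eps) z) then (mxU U z + mnU U z + eps ^+ 2 * f z) / 2
  else G z.

Lemma TT_in U z : inner Om (2 * eps) z ->
  TT U z = (mxU U z + mnU U z + eps ^+ 2 * f z) / 2.
Proof. by move=> hi; rewrite /TT; destruct (pselect (inner Om (2 * eps) z)). Qed.

Lemma TT_out U z : ~ inner Om (2 * eps) z -> TT U z = G z.
Proof. by move=> hi; rewrite /TT; destruct (pselect (inner Om (2 * eps) z)). Qed.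

Lemma TT_mono U V : (forall z, is_node Th z -> U z <= V z) ->
  forall z, is_node Th z -> TT U z <= TT V z.
Proof.
move=> H z hz; rewrite /TT; destruct (pselect (inner Om (2 * eps) z)) as [hi|hi]; last exact: lexx.
have HI : forall x, interp Th U x <= interp Th V x.
  by move=> x; apply: interp_le => k i; apply: H; exists k, i.
have Hz := H z hz.
apply: ler_wpM2r; first by rewrite invr_ge0 ler0n.
rewrite /mxU /mnU lerD2r; apply: lerD.
  apply: bmax_le; first by apply: le_trans Hz (bmax_ge0 _ _ _).
  by move=> v hv; apply: le_trans (HI _) (@bmax_ge _ _ S (fun v => interp Th V (z + eps *: v)) (V z) v hv).
apply: bmin_ge; first by apply: le_trans (@bmin_le0 _ _ S (fun v => interp Th U (z + eps *: v)) (U z)) Hz.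
by move=> v hv; apply: le_trans (@bmin_le _ _ S (fun v => interp Th U (z + eps *: v)) (U z) v hv) (HI _).
Qed.

Lemma exist_fix Ua Ub : (forall z, is_node Th z -> Ua z <= Ub z) ->
  (forall z, is_node Th z -> Ua z <= TT Ua z) ->
  (forall z, is_node Th z -> TT Ub z <= Ub z) ->
  exists U, forall z, is_node Th z -> U z = TT U z.
Proof.
move=> hab ha hb.
pose A U := forall z, is_node Th z -> (Ua z <= U z /\ U z <= Ub z) /\ U z <= TT U z.
have Aa : A Ua by move=> z hz; split; [split; [exact: lexx | exact: hab] | exact: ha].
pose E z : set R := fun y => exists U, A U /\ y = U z.
pose Us z := sup (E z).
have hsup : forall z, is_node Th z -> has_sup (E z).
  move=> z hz; split; first by exists (Ua z), Ua.
  by exists (Ub z) => y [U [HU ->]]; case: (HU z hz) => [[_ ?] _].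
have Uup : forall U, A U -> forall z, is_node Th z -> U z <= Us z.
  by move=> U HU z hz; apply: sup_upper_bound; [exact: hsup | exists U].
have Ule : forall z, is_node Th z -> Us z <= Ub z.
  move=> z hz; apply: ge_sup; first by exists (Ua z), Ua.
  by move=> y [U [HU ->]]; case: (HU z hz) => [[_ ?] _].
have Us_sub : forall z, is_node Th z -> Us z <= TT Us z.
  move=> z hz; apply: ge_sup; first by exists (Ua z), Ua.
  move=> y [U [HU ->]]; apply: le_trans (proj2 (HU z hz)) _.
  by apply: TT_mono => // z' hz'; apply: Uup.
have ATT : A (TT Us).
  move=> z hz; split; [split|].
  - apply: le_trans (ha z hz) _; apply: TT_mono => // z' hz'; exact: Uup.
  - apply: le_trans (hb z hz); apply: TT_mono => // z' hz'; exact: Ule.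
  - exact: TT_mono.
exists Us => z hz; apply/eqP; rewrite eq_le Us_sub //=.
exact: Uup.
Qed.


Hypothesis hnd : forall k, nondeg_simplex (Th k).
Hypothesis hc : conforming Th.
Hypothesis hSs : forall v, v \in S -> - v \in S.
Hypothesis hSne : exists v, v \in S.

Lemma sq_unit v : v \in S -> sq v = 1.
Proof.
move=> hv; have := hSu hv; rewrite enormE => H.
by rewrite -(sqr_sqrtr (sq_ge0 v)) H expr1n.
Qed.

Lemma dotN (x y : pt) : dot x (- y) = - dot x y.
Proof. by rewrite /dot -sumrN; apply: eq_bigr => i _; rewrite mxE mulrN. Qed.

Lemma dotZ (x y : pt) c : dot x (c *: y) = c * dot x y.
Proof. by rewrite /dot mulr_sumr; apply: eq_bigr => i _; rewrite mxE mulrCA. Qed.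

Lemma sq_pm (z v : pt) e :
  sq (z + e *: v) + sq (z + e *: (- v)) = 2 * sq z + 2 * e ^+ 2 * sq v.
Proof.
rewrite !sqD !sqZ !dotZ dotN.
have -> : sq (- v) = sq v by rewrite -scaleN1r sqZ sqrrN expr1n mul1r.
ring.
Qed.

Lemma interp_quad (c a : R) z : 0 <= a -> (exists k lam, bary (Th k) lam z) ->
  c + a * sq z <= interp Th (fun x => c + a * sq x) z.
Proof.
move=> ha [k [lam Hb]]; rewrite (interpE hnd hc _ Hb).
have := jensen Hb; case: Hb => [lp [ls _]] Hj.
rewrite (eq_bigr (fun i => c * lam i + a * (lam i * sq (Th k i)))); last by move=> i _; ring.
rewrite big_split /= -mulr_sumr -mulr_sumr ls mulr1 lerD2l.
by apply: ler_wpM2l.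
Qed.

Lemma interp_quadN (c a : R) z : 0 <= a -> (exists k lam, bary (Th k) lam z) ->
  interp Th (fun x => c - a * sq x) z <= c - a * sq z.
Proof.
move=> ha [k [lam Hb]]; rewrite (interpE hnd hc _ Hb).
have := jensen Hb; case: Hb => [lp [ls _]] Hj.
rewrite (eq_bigr (fun i => c * lam i - a * (lam i * sq (Th k i)))); last by move=> i _; ring.
rewrite sumrB /= -mulr_sumr -mulr_sumr ls mulr1 lerD2l lerN2.
by apply: ler_wpM2l.
Qed.

Lemma sub_ok (c a : R) z : (forall x, Om x -> `|f x| <= a) -> inner Om (2 * eps) z ->
  c + a * sq z <= (mxU (fun x => c + a * sq x) z + mnU (fun x => c + a * sq x) z
                   + eps ^+ 2 * f z) / 2.
Proof.
move=> hf hz.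
have hfz : `|f z| <= a by apply: hf; case: hz.
have ha : 0 <= a by apply: le_trans hfz.
set q := fun x => c + a * sq x.
pose I v := interp Th q (z + eps *: v).
have hI : forall v, v \in S -> q (z + eps *: v) <= I v.
  by move=> v hv; apply: interp_quad => //; apply: stencil.
have hg : forall v, v \in S ->
    q (z + eps *: v) + q (z + eps *: (- v)) = 2 * q z + 2 * (a * eps ^+ 2).
  move=> v hv; rewrite /q.
  have := sq_pm z v eps; rewrite (sq_unit hv) mulr1 => H.
  have -> : c + a * sq (z + eps *: v) + (c + a * sq (z + eps *: - v))
          = 2 * c + a * (sq (z + eps *: v) + sq (z + eps *: - v)) by ring.
  rewrite H; ring.
set mx := mxU q z; set mn := mnU q z.
have hmx : forall v, v \in S -> I v <= mx.
  by move=> v hv; apply: (@bmax_ge _ _ S I (q z) v hv).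
have hmx0 : q z <= mx by apply: bmax_ge0.
have hsum : 2 * q z + a * eps ^+ 2 <= mx + mn.
  case: (bmin_cases S I (q z)) => [E|[v1 hv1 E]].
    have [v0 hv0] := hSne.
    have h1 := le_trans (hI _ hv0) (hmx _ hv0).
    have h2 := le_trans (hI _ (hSs hv0)) (hmx _ (hSs hv0)).
    have h3 := hg _ hv0.
    rewrite /mn /mnU -/I E.
    have : 0 <= a * eps ^+ 2 by rewrite mulr_ge0 ?sqr_ge0.
    lra.
  have h1 := hI _ hv1.
  have h2 := le_trans (hI _ (hSs hv1)) (hmx _ (hSs hv1)).
  have h3 := hg _ hv1.
  rewrite /mn /mnU -/I E.
  have : 0 <= a * eps ^+ 2 by rewrite mulr_ge0 ?sqr_ge0.
  lra.
have hfe : - (a * eps ^+ 2) <= eps ^+ 2 * f z.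
  have hfa : 0 <= f z + a.
    have : - f z <= a by apply: le_trans hfz; rewrite -normrN ler_norm.
    lra.
  have := mulr_ge0 (sqr_ge0 eps) hfa; rewrite mulrDr; lra.
have -> : c + a * sq z = q z by [].
rewrite ler_pdivlMr //; lra.
Qed.

Lemma super_ok (c a : R) z : (forall x, Om x -> `|f x| <= a) -> inner Om (2 * eps) z ->
  (mxU (fun x => c - a * sq x) z + mnU (fun x => c - a * sq x) z
                   + eps ^+ 2 * f z) / 2 <= c - a * sq z.
Proof.
move=> hf hz.
have hfz : `|f z| <= a by apply: hf; case: hz.
have ha : 0 <= a by apply: le_trans hfz.
set q := fun x => c - a * sq x.
pose I v := interp Th q (z + eps *: v).
have hI : forall v, v \in S -> I v <= q (z + eps *: v).
  by move=> v hv; apply: interp_quadN => //; apply: stencil.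
have hg : forall v, v \in S ->
    q (z + eps *: v) + q (z + eps *: (- v)) = 2 * q z - 2 * (a * eps ^+ 2).
  move=> v hv; rewrite /q.
  have := sq_pm z v eps; rewrite (sq_unit hv) mulr1 => H.
  have -> : c - a * sq (z + eps *: v) + (c - a * sq (z + eps *: - v))
          = 2 * c - a * (sq (z + eps *: v) + sq (z + eps *: - v)) by ring.
  rewrite H; ring.
set mx := mxU q z; set mn := mnU q z.
have hmn : forall v, v \in S -> mn <= I v.
  by move=> v hv; apply: (@bmin_le _ _ S I (q z) v hv).
have hmn0 : mn <= q z by apply: bmin_le0.
have hsum : mx + mn <= 2 * q z - a * eps ^+ 2.
  case: (bmax_cases S I (q z)) => [E|[v1 hv1 E]].
    have [v0 hv0] := hSne.
    have h1 := le_trans (hmn _ hv0) (hI _ hv0).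
    have h2 := le_trans (hmn _ (hSs hv0)) (hI _ (hSs hv0)).
    have h3 := hg _ hv0.
    rewrite /mx /mxU -/I E.
    have : 0 <= a * eps ^+ 2 by rewrite mulr_ge0 ?sqr_ge0.
    lra.
  have h1 := hI _ hv1.
  have h2 := le_trans (hmn _ (hSs hv1)) (hI _ (hSs hv1)).
  have h3 := hg _ hv1.
  rewrite /mx /mxU -/I E.
  have : 0 <= a * eps ^+ 2 by rewrite mulr_ge0 ?sqr_ge0.
  lra.
have hfe : eps ^+ 2 * f z <= a * eps ^+ 2.
  have hfa : 0 <= a - f z.
    have : f z <= a by apply: le_trans hfz; rewrite ler_norm.
    lra.
  have := mulr_ge0 (sqr_ge0 eps) hfa; rewrite mulrBr; lra.
have -> : c - a * sq z = q z by [].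
rewrite ler_pdivrMr //; lra.
Qed.


Lemma existence (Mf : R) : (forall x, Om x -> `|f x| <= Mf) ->
  exists u, disc_solution Th Om eps S f G u.
Proof.
move=> hMf.
set a := `|Mf| + 1.
have hf : forall x, Om x -> `|f x| <= a.
  move=> x hx; apply: le_trans (hMf x hx) _; apply: le_trans (ler_norm Mf) _; rewrite /a; lra.
have ha : 0 <= a by rewrite /a; have := normr_ge0 Mf; lra.
have heps : 0 < eps by apply: lt_le_trans hh.
pose B := \big[Num.max/0]_(ki : 'I_m * 'I_n.+2)
            (`|G (Th ki.1 ki.2)| + 2 * (a * sq (Th ki.1 ki.2))).
have hB : forall z, is_node Th z -> `|G z| + 2 * (a * sq z) <= B.
  move=> z [k [i <-]].
  exact: (@bmax_ge _ _ (index_enum _)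
     (fun ki : 'I_m * 'I_n.+2 => `|G (Th ki.1 ki.2)| + 2 * (a * sq (Th ki.1 ki.2))) 0 (k, i)
     (mem_index_enum _)).
have hpos : forall z : pt, 0 <= a * sq z by move=> z; apply: mulr_ge0 => //; exact: sq_ge0.
have [U HU] : exists U, forall z, is_node Th z -> U z = TT U z.
  apply: (@exist_fix (fun x => - B + a * sq x) (fun x => B - a * sq x)).
- move=> z hz; have := hB z hz; have := hpos z; have := normr_ge0 (G z); lra.
- move=> z hz; case: (pselect (inner Om (2 * eps) z)) => hi.
    by rewrite TT_in //; exact: sub_ok.
  rewrite TT_out //.
  have h1 : - G z <= `|G z| by rewrite -normrN ler_norm.
  have := hB z hz; have := hpos z; lra.
- move=> z hz; case: (pselect (inner Om (2 * eps) z)) => hi.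
    by rewrite TT_in //; exact: super_ok.
  rewrite TT_out //.
  have := hB z hz; have := hpos z; have := ler_norm (G z); lra.
exists (interp Th U); split; first exact: in_Vh_interp.
have hu : forall z, is_node Th z -> interp Th U z = U z.
  by move=> z [k [i <-]]; rewrite interp_node.
split.
  move=> z hz hi; rewrite /disc_inflap (hu z hz) -/(mxU U z) -/(mnU U z).
  rewrite (HU z hz) TT_in //.
  have -> : 2 * ((mxU U z + mnU U z + eps ^+ 2 * f z) / 2) - mxU U z - mnU U z
          = eps ^+ 2 * f z by field.
  by rewrite mulrA mulVf ?mul1r // sqrf_eq0 gt_eqF.
by move=> z hz hni; rewrite (hu z hz) (HU z hz) TT_out.
Qed.


Lemma avg_le (lam x : 'I_n.+2 -> R) a : (forall i, 0 <= lam i) -> \sum_i lam i = 1 ->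
  (forall i, 0 < lam i -> x i <= a) ->
  \sum_i lam i * x i <= a /\ (\sum_i lam i * x i = a -> forall i, 0 < lam i -> x i = a).
Proof.
move=> lp ls hx.
have ht : forall i, 0 <= lam i * (a - x i).
  move=> i; case: (eqVneq (lam i) 0) => [->|hi]; first by rewrite mul0r.
  have hp : 0 < lam i by rewrite lt_def hi lp.
  by rewrite mulr_ge0 ?lp // subr_ge0 hx.
have E : \sum_i lam i * (a - x i) = a - \sum_i lam i * x i.
  under eq_bigr do rewrite mulrBr.
  by rewrite sumrB -mulr_suml ls mul1r.
split.
  by rewrite -subr_ge0 -E; apply: sumr_ge0 => i _.
move=> hs i hi.
have := @psumr_eq0P _ _ predT (fun i => lam i * (a - x i)) (fun i _ => ht i).
rewrite E hs subrr => /(_ erefl i isT) /eqP; rewrite mulf_eq0 => /orP[/eqP h0|].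
  by move: hi; rewrite h0 ltxx.
by rewrite subr_eq0 => /eqP ->.
Qed.

Lemma avg_ge (lam x : 'I_n.+2 -> R) a : (forall i, 0 <= lam i) -> \sum_i lam i = 1 ->
  (forall i, 0 < lam i -> a <= x i) -> a <= \sum_i lam i * x i.
Proof.
move=> lp ls hx.
have hx' : forall i, 0 < lam i -> - x i <= - a by move=> i hi; rewrite lerN2 hx.
have [H _] := @avg_le lam (fun i => - x i) (- a) lp ls hx'.
have E : \sum_i lam i * - x i = - \sum_i lam i * x i.
  by rewrite -sumrN; apply: eq_bigr => i _; rewrite mulrN.
by move: H; rewrite E lerN2.
Qed.

Lemma uniq_le u1 u2 :
  ((exists2 c, c < 0 & forall x, Om x -> f x <= c) \/
   (exists2 c, 0 < c & forall x, Om x -> c <= f x) \/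
   ((forall x, Om x -> f x = 0) /\ cond_M1 Th Om eps S)) ->
  disc_solution Th Om eps S f G u1 -> disc_solution Th Om eps S f G u2 ->
  forall k i, u1 (Th k i) <= u2 (Th k i).
Proof.
move=> hfc [hV1 [hI1 hB1]] [hV2 [hI2 hB2]].
have heps : 0 < eps by apply: lt_le_trans hh.
have he2 : 0 < eps ^+ 2 by rewrite exprn_gt0.
pose nd (ki : 'I_m * 'I_n.+2) := Th ki.1 ki.2.
pose w ki := u1 (nd ki) - u2 (nd ki).
move=> k0 i0; rewrite leNgt; apply/negP => hlt.
have w0 : 0 < w (k0, i0) by rewrite /w /nd /= subr_gt0.
have [kM _ hM] : exists2 kM, true & forall ki, w ki <= w kM.
  by case: (@arg_maxP _ _ _ (k0, i0) xpredT w isT) => j _ Hj; exists j => // ki; apply: Hj.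
set M := w kM.
have M0 : 0 < M by apply: lt_le_trans w0 (hM _).
have hnode : forall ki, is_node Th (nd ki) by move=> [k i]; exists k, i.
have hwbd : forall ki, w ki = M -> inner Om (2 * eps) (nd ki).
  move=> ki hw; case: (pselect (inner Om (2 * eps) (nd ki))) => // hn.
  by move: hw; rewrite /w hB1 ?hB2 // subrr => hx; move: M0; rewrite -hx ltxx.
have F1 : forall k lam p, bary (Th k) lam p -> u1 p - u2 p <= M /\
    (u1 p - u2 p = M -> forall i, 0 < lam i -> w (k, i) = M).
  move=> k lam p Hb.
  have E : u1 p - u2 p = \sum_i lam i * w (k, i).
    by rewrite (hV1 _ _ _ Hb) (hV2 _ _ _ Hb) -sumrB; apply: eq_bigr => i _; rewrite mulrBr.
  case: Hb => lp [ls _].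
  have := @avg_le lam (fun i => w (k, i)) M lp ls (fun i _ => hM (k, i)).
  by rewrite -E.
have F2 : forall k lam p a, bary (Th k) lam p ->
    (forall i, 0 < lam i -> u1 (Th k i) <= a) ->
    u1 p <= a /\ (u1 p = a -> forall i, 0 < lam i -> u1 (Th k i) = a).
  move=> k lam p a Hb; rewrite (hV1 _ _ _ Hb); case: Hb => lp [ls _].
  exact: avg_le.
have F2' : forall k lam p a, bary (Th k) lam p ->
    (forall i, 0 < lam i -> a <= u2 (Th k i)) -> a <= u2 p.
  move=> k lam p a Hb; rewrite (hV2 _ _ _ Hb); case: Hb => lp [ls _].
  exact: avg_ge.
pose mxA z := \big[Num.max/u1 z]_(v <- S) u1 (z + eps *: v).
pose mnA z := \big[Num.min/u1 z]_(v <- S) u1 (z + eps *: v).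
pose mxB z := \big[Num.max/u2 z]_(v <- S) u2 (z + eps *: v).
pose mnB z := \big[Num.min/u2 z]_(v <- S) u2 (z + eps *: v).
have eqA : forall z, is_node Th z -> inner Om (2 * eps) z ->
    2 * u1 z - mxA z - mnA z = eps ^+ 2 * f z.
  move=> z hz hi; rewrite -(hI1 z hz hi) /disc_inflap mulrA mulfV ?mul1r //.
  by rewrite gt_eqF.
have eqB : forall z, is_node Th z -> inner Om (2 * eps) z ->
    2 * u2 z - mxB z - mnB z = eps ^+ 2 * f z.
  move=> z hz hi; rewrite -(hI2 z hz hi) /disc_inflap mulrA mulfV ?mul1r //.
  by rewrite gt_eqF.
have key : forall z, is_node Th z -> inner Om (2 * eps) z -> u1 z - u2 z = M ->
    mxA z = mxB z + M /\ mnA z = mnB z + M.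
  move=> z hz hi hw.
  have hAB : forall v, v \in S -> u1 (z + eps *: v) - u2 (z + eps *: v) <= M.
    by move=> v hv; have [k [lam Hb]] := stencil hi hv; case: (F1 _ _ _ Hb).
  have h1 : mxA z <= mxB z + M.
    apply: bmax_le.
      have := @bmax_ge0 _ _ S (fun v => u2 (z + eps *: v)) (u2 z).
      rewrite -/(mxB z); lra.
    move=> v hv; have := @bmax_ge _ _ S (fun v => u2 (z + eps *: v)) (u2 z) v hv.
    rewrite -/(mxB z); have := hAB v hv; lra.
  have h2 : mnA z <= mnB z + M.
    case: (@bmin_cases _ _ S (fun v => u2 (z + eps *: v)) (u2 z)) => [E|[v hv E]].
      rewrite /mnB E; have := @bmin_le0 _ _ S (fun v => u1 (z + eps *: v)) (u1 z).
      rewrite -/(mnA z); lra.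
    rewrite /mnB E; have := @bmin_le _ _ S (fun v => u1 (z + eps *: v)) (u1 z) v hv.
    rewrite -/(mnA z); have := hAB v hv; lra.
  have e1 := eqA z hz hi; have e2 := eqB z hz hi.
  split; lra.
have G1 : forall z, is_node Th z -> inner Om (2 * eps) z -> u1 z - u2 z = M ->
    (forall ki, w ki = M -> u1 (nd ki) <= u1 z) -> mxA z <= u1 z.
  move=> z hz hi hw hmax.
  case: (@bmax_cases _ _ S (fun v => u1 (z + eps *: v)) (u1 z)) => [E|[v hv E]].
    by rewrite /mxA E.
  rewrite /mxA E.
  have [k [lam Hb]] := stencil hi hv.
  have [hle heq] := F1 _ _ _ Hb.
  have hB := @bmax_ge _ _ S (fun v => u2 (z + eps *: v)) (u2 z) v hv.
  have [mxe _] := key z hz hi hw.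
  move: mxe; rewrite /mxA E -/(mxB z) => mxe.
  have hwM : u1 (z + eps *: v) - u2 (z + eps *: v) = M.
    by apply/eqP; rewrite eq_le hle /=; move: hB; rewrite -/(mxB z); lra.
  have hw' := heq hwM.
  have [F2a _] := F2 k lam _ (u1 z) Hb (fun i hi => hmax (k, i) (hw' i hi)).
  exact: F2a.
have G2 : forall z, is_node Th z -> inner Om (2 * eps) z -> u1 z - u2 z = M ->
    (forall ki, w ki = M -> u2 z <= u2 (nd ki)) -> u2 z <= mnB z.
  move=> z hz hi hw hmin.
  case: (@bmin_cases _ _ S (fun v => u2 (z + eps *: v)) (u2 z)) => [E|[v hv E]].
    by rewrite /mnB E.
  rewrite /mnB E.
  have [k [lam Hb]] := stencil hi hv.
  have [hle heq] := F1 _ _ _ Hb.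
  have hA := @bmin_le _ _ S (fun v => u1 (z + eps *: v)) (u1 z) v hv.
  have [_ mne] := key z hz hi hw.
  move: mne; rewrite /mnB E -/(mnA z) => mne.
  have hwM : u1 (z + eps *: v) - u2 (z + eps *: v) = M.
    by apply/eqP; rewrite eq_le hle /=; move: hA; rewrite -/(mnA z); lra.
  have hw' := heq hwM.
  exact: (F2' k lam _ (u2 z) Hb (fun i hi => hmin (k, i) (hw' i hi))).
have [kz hkz hmaxz] : exists2 kz, w kz = M &
    forall ki, w ki = M -> u1 (nd ki) <= u1 (nd kz).
  case: (@arg_maxP _ _ _ kM (fun ki => w ki == M) (fun ki => u1 (nd ki)) (eqxx _)).
  by move=> j /eqP hj Hj; exists j => // ki /eqP; apply: Hj.
have [kn hkn hminn] : exists2 kn, w kn = M &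
    forall ki, w ki = M -> u2 (nd kn) <= u2 (nd ki).
  case: (@arg_minP _ _ _ kM (fun ki => w ki == M) (fun ki => u2 (nd ki)) (eqxx _)).
  by move=> j /eqP hj Hj; exists j => // ki /eqP; apply: Hj.
case: hfc => [[c c0 hfc]|[[c c0 hfc]|[hf0 hM1]]].
- have hi := hwbd _ hkz.
  have g1 := G1 _ (hnode kz) hi hkz hmaxz.
  have g2 := @bmin_le0 _ _ S (fun v => u1 (nd kz + eps *: v)) (u1 (nd kz)).
  have e1 := eqA _ (hnode kz) hi.
  have hf : f (nd kz) < 0 by apply: le_lt_trans c0; apply: hfc; case: hi.
  have : eps ^+ 2 * f (nd kz) < 0 by rewrite pmulr_rlt0.
  move: g2; rewrite -/(mnA (nd kz)); lra.
- have hi := hwbd _ hkn.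
  have g1 := G2 _ (hnode kn) hi hkn hminn.
  have g2 := @bmax_ge0 _ _ S (fun v => u2 (nd kn + eps *: v)) (u2 (nd kn)).
  have e1 := eqB _ (hnode kn) hi.
  have hf : 0 < f (nd kn) by apply: lt_le_trans c0 _; apply: hfc; case: hi.
  have : 0 < eps ^+ 2 * f (nd kn) by rewrite pmulr_rgt0.
  move: g2; rewrite -/(mxB (nd kn)); lra.
pose P z := exists ki, nd ki = z /\ w ki = M /\ u1 z = u1 (nd kz).
have hP : forall z, P z -> is_node Th z /\ inner Om (2 * eps) z.
  by move=> z [ki [<- [hw _]]]; split; [exact: hnode | exact: hwbd].
have [z [z' [Pz [nz' [nPz' hz']]]]] :=
  hM1 P hP (ex_intro _ (nd kz) (ex_intro _ kz (conj erefl (conj hkz erefl)))).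
case: Pz => [kp [hkp [hwp hup]]]; subst z.
case: hz' => [hzz|[v hv hpos]]; first by apply: nPz'; rewrite hzz; exists kp.
have hi := hwbd _ hwp.
have hmaxp : forall ki, w ki = M -> u1 (nd ki) <= u1 (nd kp).
  by move=> ki hw; rewrite hup; apply: hmaxz.
set z := nd kp.
have g1 := G1 _ (hnode kp) hi hwp hmaxp.
have g2 := @bmax_ge0 _ _ S (fun v => u1 (z + eps *: v)) (u1 z).
have e1 := eqA _ (hnode kp) hi.
have f0 : f z = 0 by apply: hf0; case: hi.
rewrite f0 mulr0 in e1.
have [k1 k2] := key _ (hnode kp) hi hwp.
have a1 := @bmax_ge _ _ S (fun v => u1 (z + eps *: v)) (u1 z) v hv.
have a2 := @bmin_le _ _ S (fun v => u1 (z + eps *: v)) (u1 z) v hv.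
have b1 := @bmax_ge _ _ S (fun v => u2 (z + eps *: v)) (u2 z) v hv.
have b2 := @bmin_le _ _ S (fun v => u2 (z + eps *: v)) (u2 z) v hv.
move: g2 a1 a2 b1 b2; rewrite -/(mxA z) -/(mnA z) -/(mxB z) -/(mnB z) => g2 a1 a2 b1 b2.
have hA : u1 (z + eps *: v) = u1 z by lra.
have hAB : u1 (z + eps *: v) - u2 (z + eps *: v) = M by lra.
case: hpos => [k [i [lam [hk [Hb hl]]]]].
have [_ heq] := F1 _ _ _ Hb.
have hwi := heq hAB i hl.
have [_ F2b] := F2 k lam _ (u1 z) Hb (fun j hj => hmaxp (k, j) (heq hAB j hj)).
have hui := F2b hA i hl.
apply: nPz'; exists (k, i); split; first by [].
split; first by [].
by rewrite -hk hui hup.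
Qed.

End Main.

Theorem lemma3p5 (R : realType) (n : nat) (Om : 'rV[R]_n.+1 -> Prop)
  (f g : 'rV[R]_n.+1 -> R) (gt : R -> 'rV[R]_n.+1 -> R)
  (m : nat) (Th : 'I_m -> simplex R n) (h eps theta : R) (S : seq 'rV[R]_n.+1) :
  bounded_domain_cb Om ->
  (* (RHS.1) *)
  econt_on Om f -> (exists M, forall x, Om x -> `|f x| <= M) ->
  (* (RHS.2) *)
  ((exists2 c, c < 0 & forall x, Om x -> f x <= c) \/
   (exists2 c, 0 < c & forall x, Om x -> c <= f x) \/
   (forall x, Om x -> f x = 0)) ->
  (* (BC.1) *)
  econt_on (boundary Om) g ->
  (* (BC.2) *)
  (forall e, 0 < e -> econt_on (eclosure Om) (gt e)) ->
  (forall alpha, 0 <= alpha <= 1 -> holder alpha (boundary Om) g ->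
     (forall e, 0 < e -> holder alpha (eclosure Om) (gt e)) /\
     exists C, forall e, 0 < e -> forall x, boundary Om x ->
       `|g x - gt e x| <= C * powR e alpha) ->
  (* the mesh T_h *)
  (forall k, nondeg_simplex (Th k)) -> conforming Th ->
  0 < h -> (forall k i j, enorm (Th k i - Th k j) <= h) ->
  (exists k i j, enorm (Th k i - Th k j) = h) ->
  (forall x, inner Om h x -> einterior (in_mesh Th) x) ->
  (forall x, einterior (in_mesh Th) x -> Om x) ->
  (* parameters *)
  h <= eps -> le_diam Om eps -> 0 < theta <= 1 -> sphere_net theta S ->
  (* (M.1) in case (RHS.2b) *)
  ((forall x, Om x -> f x = 0) -> cond_M1 Th Om eps S) ->
  (exists u, disc_solution Th Om eps S f (gt eps) u) /\
  (forall u1 u2, disc_solution Th Om eps S f (gt eps) u1 ->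
     disc_solution Th Om eps S f (gt eps) u2 ->
     forall x, in_mesh Th x -> u1 x = u2 x).
Proof.
move=> hdom hfcont hfb hrhs hgc hgtc hhol hnd hc hh0 hhmax hhex hmesh1 hmesh2
  hh hdiam hth hS hM1.
case: hdom => [_ [hop _]].
case: hS => [hSu [hSs hSnet]].
set e0 : 'rV[R]_n.+1 := delta_mx 0 0.
have he0 : enorm e0 = 1.
  rewrite enormE.
  have -> : sq e0 = 1.
    rewrite /sq (bigD1 0) //= big1 => [|i hi]; rewrite /e0 mxE.
      by rewrite !eqxx expr1n addr0.
    by rewrite (negbTE hi) andbF expr0n.
  by rewrite sqrtr1.
have hSne : exists v, v \in S by case: (hSnet e0 he0) => v hv _; exists v.
have [Mf hMf] := hfb.
split.
  exact: (existence (gt eps) hop hh0 hh hmesh1 hSu hnd hc hSs hSne hMf).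
have hfc : (exists2 c, c < 0 & forall x, Om x -> f x <= c) \/
   (exists2 c, 0 < c & forall x, Om x -> c <= f x) \/
   ((forall x, Om x -> f x = 0) /\ cond_M1 Th Om eps S).
  case: hrhs => [h1|[h2|h3]]; [by left | by right; left | right; right].
  by split; [exact: h3 | exact: hM1].
move=> u1 u2 s1 s2 x [k [lam Hb]].
have U12 := uniq_le hop hh0 hh hmesh1 hSu hfc s1 s2.
have U21 := uniq_le hop hh0 hh hmesh1 hSu hfc s2 s1.
case: s1 => [hV1 _]; case: s2 => [hV2 _].
rewrite (hV1 _ _ _ Hb) (hV2 _ _ _ Hb); apply: eq_bigr => i _.
by congr (_ * _); apply/eqP; rewrite eq_le U12 U21.
Qed.
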